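(* Let $P>1$, $\gamma>0$, and let $\hat x(t),l_1(t),l_{-1}(t)\in\mathbb{R}$. Assume $\max_{i\in\{-1,1\}}l_i(t)\le 0$ and \[ \min_{i\in\{-1,1\}}l_i(t)\le-\frac{P}{P-1}\hat x(t)^2. \] For $y(t)\in\mathbb{R}$ define $l_1(t+1),l_{-1}(t+1)$ as follows: if $l_1(t)\ge l_{-1}(t)$, \[ l_1(t+1)=l_1(t)-\gamma^2y(t)^2+\frac{(\gamma^2y(t))^2}{P+\gamma^2-1},\quad l_{-1}(t+1)=l_{-1}(t)-P\hat x(t)^2-\gamma^2y(t)^2+\frac{(P\hat x(t)+\gamma^2y(t))^2}{P+\gamma^2-1}; \] if $l_1(t)<l_{-1}(t)$, \[ l_1(t+1)=l_1(t)-P\hat x(t)^2-\gamma^2y(t)^2+\frac{(P\hat x(t)+\gamma^2y(t))^2}{P+\gamma^2-1},\quad l_{-1}(t+1)=l_{-1}(t)-\gamma^2y(t)^2+\frac{(\gamma^2y(t))^2}{P+\gamma^2-1}. \] Then $l_i(t+1)\le 0$ for $i\in\{-1,1\}$ (for every $y(t)\in\mathbb{R}$). *)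

(* Defs.v *)
From Stdlib Require Import Reals.
Open Scope R_scope.

Definition upd_small (P gamma y l : R) : R :=
  l - gamma^2 * y^2 + (gamma^2 * y)^2 / (P + gamma^2 - 1).

Definition upd_big (P gamma xh y l : R) : R :=
  l - P * xh^2 - gamma^2 * y^2 + (P * xh + gamma^2 * y)^2 / (P + gamma^2 - 1).

Definition l1_next (P gamma xh y l1 lm1 : R) : R :=
  if Rle_dec lm1 l1 then upd_small P gamma y l1 else upd_big P gamma xh y l1.

Definition lm1_next (P gamma xh y l1 lm1 : R) : R :=
  if Rle_dec lm1 l1 then upd_big P gamma xh y lm1 else upd_small P gamma y lm1.

(* Main.v *)
Require Import Defs.
From Stdlib Require Import Reals Lra.
Open Scope R_scope.

Lemma small_le (P gamma y l : R) : 1 < P -> 0 < gamma -> l <= 0 ->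
  upd_small P gamma y l <= 0.
Proof.
  intros HP Hg Hl. unfold upd_small.
  assert (Ha : 0 < gamma^2) by (apply pow_lt; lra).
  set (a := gamma^2) in *.
  assert (HD : 0 < P + a - 1) by lra.
  replace (l - a * y ^ 2 + (a * y) ^ 2 / (P + a - 1))
    with (l - a * (P - 1) * y^2 / (P + a - 1)) by (field; lra).
  assert (0 <= a * (P - 1) * y^2 / (P + a - 1)).
  { apply Rmult_le_pos. apply Rmult_le_pos. nra. apply pow2_ge_0.
    left; apply Rinv_0_lt_compat; lra. }
  lra.
Qed.

Lemma big_le (P gamma xh y l : R) : 1 < P -> 0 < gamma ->
  l <= - (P / (P - 1)) * xh^2 ->
  upd_big P gamma xh y l <= 0.
Proof.
  intros HP Hg Hl. unfold upd_big.
  assert (Ha : 0 < gamma^2) by (apply pow_lt; lra).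
  set (a := gamma^2) in *.
  assert (HD : 0 < P + a - 1) by lra.
  assert (Hl' : (P - 1) * l + P * xh^2 <= 0).
  { replace (- (P / (P - 1)) * xh ^ 2) with (- (P * xh^2) / (P - 1)) in Hl by (field; lra).
    apply (Rmult_le_compat_l (P - 1)) in Hl; [|lra].
    replace ((P - 1) * (- (P * xh ^ 2) / (P - 1))) with (- (P * xh^2)) in Hl by (field; lra).
    lra. }
  replace (l - P * xh ^ 2 - a * y ^ 2 + (P * xh + a * y) ^ 2 / (P + a - 1))
    with (((P + a - 1) * ((P - 1) * l + P * xh^2) - a * ((P - 1) * y - P * xh)^2)
          / ((P - 1) * (P + a - 1))) by (field; lra).
  unfold Rdiv. rewrite <- (Rmult_0_l (/ ((P - 1) * (P + a - 1)))).
  apply Rmult_le_compat_r.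
  - left; apply Rinv_0_lt_compat; nra.
  - assert (0 <= a * ((P - 1) * y - P * xh)^2) by (apply Rmult_le_pos; [lra| apply pow2_ge_0]).
    nra.
Qed.

Theorem lemma5 (P gamma xh l1 lm1 : R) :
  1 < P -> 0 < gamma ->
  Rmax l1 lm1 <= 0 ->
  Rmin l1 lm1 <= - (P / (P - 1)) * xh^2 ->
  forall y : R,
    l1_next P gamma xh y l1 lm1 <= 0 /\ lm1_next P gamma xh y l1 lm1 <= 0.
Proof.
  intros HP Hg Hmax Hmin y.
  assert (H1 : l1 <= 0) by (eapply Rle_trans; [apply Rmax_l|exact Hmax]).
  assert (H2 : lm1 <= 0) by (eapply Rle_trans; [apply Rmax_r|exact Hmax]).
  unfold l1_next, lm1_next.
  destruct (Rle_dec lm1 l1) as [Hle|Hlt].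
  - rewrite Rmin_right in Hmin by exact Hle.
    split; [apply small_le | apply big_le]; auto.
  - rewrite Rmin_left in Hmin by lra.
    split; [apply big_le | apply small_le]; auto.
Qed.
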